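(* Let $\mathcal{L}^{TF}\subseteq\mathcal{L}$ be the sublanguage in which every update model occurring in a formula has all its postconditions in $\{\top,\bot\}$ on their domains (i.e. $\mathsf{post}(\mathsf{e})(p)\in\{\top,\bot\}$ for every event $\mathsf{e}$ and every $p\in\mathrm{dom}(\mathsf{post}(\mathsf{e}))$). Then $\mathcal{L}^{TF}$ and $\mathcal{L}$ are equally expressive: for every formula $\phi\in\mathcal{L}$ there is a formula $\psi\in\mathcal{L}^{TF}$ such that $\phi$ and $\psi$ are true in exactly the same pointed epistemic models.
   Context: Fix a finite set of agents $A$ and countable set of atoms $P$. The language $\mathcal{L}$ is defined by simultaneous induction: $\phi ::= p\mid\neg\phi\mid\phi\wedge\phi\mid[\alpha]\phi$, $\alpha ::= a\mid B^*\mid(\mathsf{U},\mathsf{e})$, $a\in A$, $B\subseteq A$, where an update model $\mathsf{U}=(\mathsf{E},\mathsf{R},\mathsf{pre},\mathsf{post})$ has finite nonempty event set $\mathsf{E}$, $\mathsf{R}:A\to\wp(\mathsf{E}\times\mathsf{E})$, preconditions $\mathsf{pre}:\mathsf{E}\to\mathcal{L}$, and postconditions $\mathsf{post}:\mathsf{E}\to(P\to\mathcal{L})$, each $\mathsf{post}(\mathsf{e})$ differing from the identity on a finite set $\mathrm{dom}(\mathsf{post}(\mathsf{e}))$; $\mathsf{e}\in\mathsf{E}$. Semantics on epistemic models $M=(S,R,V)$ ($R:A\to\wp(S\times S)$, $V:P\to\wp(S)$): atoms via $V$; Booleans standard; $[a]\phi$ holds at $s$ iff $\phi$ holds at all $R(a)$-successors;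 $[B^*]\phi$ iff $\phi$ holds at all states reachable via the reflexive transitive closure of $\bigcup_{a\in B}R(a)$; $(M,s)\models[\mathsf{U},\mathsf{e}]\phi$ iff $(M,s)\models\mathsf{pre}(\mathsf{e})$ implies $(M\otimes\mathsf{U},(s,\mathsf{e}))\models\phi$, where $M\otimes\mathsf{U}$ has domain $\{(t,\mathsf{f}) : (M,t)\models\mathsf{pre}(\mathsf{f})\}$, $((t,\mathsf{f}),(u,\mathsf{g}))$ related for $a$ iff $(t,u)\in R(a)$ and $(\mathsf{f},\mathsf{g})\in\mathsf{R}(a)$, and $(t,\mathsf{f})$ satisfies $p$ iff $(M,t)\models\mathsf{post}(\mathsf{f})(p)$. *)

(* Defs.v *)
From mathcomp Require Import all_boot.
From Stdlib Require Import Relations.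
Set Implicit Arguments. Unset Strict Implicit. Unset Printing Implicit Defensive.

Section Syntax.
Variables (A : finType) (P : countType).

(* An update model with
   event set E = 'I_n.+1 (finite, nonempty), accessibility R : A -> rel E,
   preconditions pre : E -> form, postconditions post : E -> seq (P * form)
   (a finite list of substitutions; post(e)(p) is the first binding of p in
   the list, or p itself if there is none), and actual event e. *)
Inductive form : Type :=
  | Atom of P
  | Neg of form
  | And of form & form
  | Box of prog & form
with prog : Type :=
  | Ag of A
  | Star of {set A}
  | Upd (n : nat) (R : A -> rel 'I_n.+1) (pre : 'I_n.+1 -> form)
        (post : 'I_n.+1 -> seq (P * form)) (e : 'I_n.+1).

Fixpoint lookup (l : seq (P * form)) (p : P) : option form :=
  match l with
  | [::] => None
  | (q, phi) :: l' => if q == p then Some phi else lookup l' p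
  end.

Definition postval (l : seq (P * form)) (p : P) : form :=
  odflt (Atom p) (lookup l p).

Definition is_bot (f : form) : Prop := exists q, f = And (Atom q) (Neg (Atom q)).
Definition is_top (f : form) : Prop := exists q, f = Neg (And (Atom q) (Neg (Atom q))).

(* The sublanguage L^TF: every update model occurring in the formula has
   post(e)(p) in {top, bot} for every p in dom(post(e)) = {p | post(e)(p) <> p}. *)
Fixpoint TF (f : form) : Prop :=
  match f with
  | Atom _ => True
  | Neg g => TF g
  | And g h => TF g /\ TF h
  | Box a g =>
      TF g /\
      match a with
      | Ag _ => True
      | Star _ => True
      | Upd n R pre post e =>
          (forall x, TF (pre x)) /\
          (forall x, (fix allTF (l : seq (P * form)) : Prop :=
                        match l with
                        | [::] => True
                        | (_, phi) :: l' => TF phi /\ allTF l'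
                        end) (post x)) /\
          (forall x p, postval (post x) p <> Atom p ->
                 is_top (postval (post x) p) \/ is_bot (postval (post x) p))
      end
  end.

Record model (S : Type) := Model {
  mrel : A -> S -> S -> Prop;
  mval : P -> S -> Prop }.

(* Satisfaction; the product update M (x) U has as domain the subtype of
   pairs (t, f) with (M,t) |= pre(f). *)
Fixpoint sat (S : Type) (M : model S) (s : S) (f : form) {struct f} : Prop :=
  match f with
  | Atom p => mval M p s
  | Neg g => ~ sat M s g
  | And g h => sat M s g /\ sat M s h
  | Box a g =>
      match a with
      | Ag i => forall t, mrel M i s t -> sat M t g
      | Star B =>
          forall t, clos_refl_trans S (fun x y => exists i, i \in B /\ mrel M i x y) s t ->
                    sat M t g
      | Upd n R pre post e =>
          forall H : sat M s (pre e),
            sat (@Model {x : S * 'I_n.+1 | sat M x.1 (pre x.2)}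
                   (fun i x y => mrel M i (proj1_sig x).1 (proj1_sig y).1 /\
                                 R i (proj1_sig x).2 (proj1_sig y).2)
                   (fun p x =>
                      (fix look (l : seq (P * form)) : Prop :=
                         match l with
                         | [::] => mval M p (proj1_sig x).1
                         | (q, phi) :: l' =>
                             if q == p then sat M (proj1_sig x).1 phi else look l'
                         end) (post (proj1_sig x).2)))
                (exist _ (s, e) H) g
      end
  end.

End Syntax.

(* Main.v *)
Require Import Defs.
From mathcomp Require Import all_boot.
From Stdlib Require Import Relations Classical.
Set Implicit Arguments. Unset Strict Implicit. Unset Printing Implicit Defensive.

Section Main.
Variables (A : finType) (P : countType).
Local Notation form := (form A P).
Local Notation prog := (prog A P).

Fixpoint allF (Q : form -> Prop) (l : seq (P * form)) : Prop :=
  match l with [::] => True | qp :: l' => Q qp.2 /\ allF Q l' end.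

Definition progIH (Q : form -> Prop) (a : prog) : Prop :=
  match a with
  | Upd n R pre post e => (forall x, Q (pre x)) /\ (forall x, allF Q (post x))
  | _ => True
  end.

Section Ind.
Variable Q : form -> Prop.
Hypotheses (HA : forall p, Q (Atom A p)) (HN : forall f, Q f -> Q (Neg f))
  (HC : forall f g, Q f -> Q g -> Q (And f g))
  (HB : forall a g, progIH Q a -> Q g -> Q (Box a g)).
Fixpoint form_ind2 (f : form) : Q f :=
  match f with
  | Atom p => HA p
  | Neg g => HN (form_ind2 g)
  | And g h => HC (form_ind2 g) (form_ind2 h)
  | Box a g => HB (prog_ind2 a) (form_ind2 g)
  end
with prog_ind2 (a : prog) : progIH Q a :=
  match a return progIH Q a with
  | Ag _ => I
  | Star _ => I
  | Upd n R pre post e => conj (fun x => form_ind2 (pre x))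
      (fun x => (fix go (l : seq (P * form)) : allF Q l :=
          match l return allF Q l with
          | [::] => I
          | (q, phi) :: l' => conj (form_ind2 phi) (go l')
          end) (post x))
  end.
End Ind.

Definition lookP S (M : model A P S) (t : S) (p : P) :=
  fix look (l : seq (P * form)) : Prop :=
    match l with
    | [::] => mval M p t
    | (q, phi) :: l' => if q == p then sat M t phi else look l'
    end.

Record bisim S T (M : model A P S) (N : model A P T) (Z : S -> T -> Prop) := {
  b_atom : forall s t p, Z s t -> (mval M p s <-> mval N p t);
  b_forth : forall i s t s', Z s t -> mrel M i s s' -> exists t', mrel N i t t' /\ Z s' t';
  b_back : forall i s t t', Z s t -> mrel N i t t' -> exists s', mrel M i s s' /\ Z s' t' }.

Lemma bisim_sym S T (M : model A P S) (N : model A P T) Z :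
  bisim M N Z -> bisim N M (fun t s => Z s t).
Proof.
move=> [h1 h2 h3]; split.
- by move=> t s p /h1 ->.
- move=> i t s t' Z1 Z2; have [s' [? ?]] := h3 _ _ _ _ Z1 Z2; by exists s'.
- move=> i t s s' Z1 Z2; have [t' [? ?]] := h2 _ _ _ _ Z1 Z2; by exists t'.
Qed.

Lemma bisim_star S T (M : model A P S) (N : model A P T) Z (B : {set A}) :
  bisim M N Z -> forall s s', clos_refl_trans S (fun x y => exists i, i \in B /\ mrel M i x y) s s' ->
  forall t, Z s t -> exists t', clos_refl_trans T (fun x y => exists i, i \in B /\ mrel N i x y) t t' /\ Z s' t'.
Proof.
move=> hb s s' H; induction H as [x y [i [iB xy]]| x | x y z _ IH1 _ IH2] => t Zt.
- have [t' [? ?]] := b_forth hb Zt xy. exists t'; split=> //; apply: rt_step; by exists i.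
- exists t; split=> //; exact: rt_refl.
- have [t1 [r1 Z1]] := IH1 _ Zt. have [t2 [r2 Z2]] := IH2 _ Z1.
  exists t2; split=> //; exact: rt_trans r1 r2.
Qed.

Definition prodM S (M : model A P S) n (R : A -> rel 'I_n.+1) (pre : 'I_n.+1 -> form)
   (post : 'I_n.+1 -> seq (P * form)) :=
  @Model A P {x : S * 'I_n.+1 | sat M x.1 (pre x.2)}
     (fun i x y => mrel M i (proj1_sig x).1 (proj1_sig y).1 /\
                   R i (proj1_sig x).2 (proj1_sig y).2)
     (fun p x => lookP M (proj1_sig x).1 p (post (proj1_sig x).2)).

Lemma sat_Upd S (M : model A P S) s n R pre post e g :
  sat M s (Box (@Upd A P n R pre post e) g) =
  forall H : sat M s (pre e), sat (prodM M R pre post) (exist _ (s, e) H) g.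
Proof. by []. Qed.

Lemma bisim_sat (f : form) : forall S T (M : model A P S) (N : model A P T) Z,
  bisim M N Z -> forall s t, Z s t -> (sat M s f <-> sat N t f).
Proof.
elim/form_ind2: f.
- move=> p S T M N Z hb s t Zst /=; exact: b_atom hb _ _ _ Zst.
- move=> f IH S T M N Z hb s t Zst /=; by rewrite (IH _ _ _ _ _ hb _ _ Zst).
- move=> f g IH1 IH2 S T M N Z hb s t Zst /=.
  by rewrite (IH1 _ _ _ _ _ hb _ _ Zst) (IH2 _ _ _ _ _ hb _ _ Zst).
- move=> [i|B|n R pre post e] g IHa IH S T M N Z hb s t Zst.
  + simpl; split.
    * move=> H t' tt'. have [s' [ss' Z']] := b_back hb Zst tt'.
      by rewrite -(IH _ _ _ _ _ hb _ _ Z'); apply: H.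
    * move=> H s' ss'. have [t' [tt' Z']] := b_forth hb Zst ss'.
      by rewrite (IH _ _ _ _ _ hb _ _ Z'); apply: H.
  + simpl; split.
    * move=> H t' tt'.
      have [s' [ss' Z']] := bisim_star (bisim_sym hb) tt' Zst.
      by rewrite -(IH _ _ _ _ _ hb _ _ Z'); apply: H.
    * move=> H s' ss'. have [t' [tt' Z']] := bisim_star hb ss' Zst.
      by rewrite (IH _ _ _ _ _ hb _ _ Z'); apply: H.
  + case: IHa => IHpre IHpost.
    set Z' := fun (x : {x : S * 'I_n.+1 | sat M x.1 (pre x.2)})
                  (y : {y : T * 'I_n.+1 | sat N y.1 (pre y.2)}) =>
               Z (proj1_sig x).1 (proj1_sig y).1 /\ (proj1_sig x).2 = (proj1_sig y).2.
    have hb' : bisim (prodM M R pre post) (prodM N R pre post) Z'.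
      split.
      * move=> [[s1 x1] h1] [[t1 y1] h2] p [/= Z1 <-] /=.
        move: (IHpost x1); elim: (post x1) => [|[q phi] l IHl] /=.
        - move=> _; exact: b_atom hb _ _ _ Z1.
        - move=> [Hphi Hl]; case: (q == p); last exact: IHl.
          exact: Hphi _ _ _ _ _ hb _ _ Z1.
      * move=> i [[s1 x1] h1] [[t1 y1] h2] [[s2 x2] h3] [/= Z1 <-] [/= r1 r2].
        have [t2 [tt Z2]] := b_forth hb Z1 r1.
        have h4 : sat N t2 (pre x2) by rewrite -(IHpre x2 _ _ _ _ _ hb _ _ Z2).
        by exists (exist _ (t2, x2) h4).
      * move=> i [[s1 x1] h1] [[t1 y1] h2] [[t2 y2] h3] [/= Z1 <-] [/= r1 r2].
        have [s2 [ss Z2]] := b_back hb Z1 r1.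
        have h4 : sat M s2 (pre y2) by rewrite (IHpre y2 _ _ _ _ _ hb _ _ Z2).
        by exists (exist _ (s2, y2) h4).
    rewrite !sat_Upd; split.
    * move=> H H'. have H0 : sat M s (pre e) by rewrite (IHpre e _ _ _ _ _ hb _ _ Zst).
      rewrite -(IH _ _ _ _ _ hb' (exist _ (s, e) H0)) //. 
    * move=> H H0. have H' : sat N t (pre e) by rewrite -(IHpre e _ _ _ _ _ hb _ _ Zst).
      rewrite (IH _ _ _ _ _ hb' _ (exist _ (t, e) H')) //. 
Qed.


Definition botf (q : P) : form := And (Atom A q) (Neg (Atom A q)).
Definition topf q := Neg (botf q).

Fixpoint conj_lits (base : form) (l : seq (P * form)) (b : nat -> bool) : form :=
  match l with [::] => base
  | (q, phi) :: l' => And (if b 0 then phi else Neg phi) (conj_lits base l' (fun j => b j.+1)) end.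

Fixpoint newpost (l : seq (P * form)) (b : nat -> bool) : seq (P * form) :=
  match l with [::] => [::]
  | (q, phi) :: l' => (q, if b 0 then topf q else botf q) :: newpost l' (fun j => b j.+1) end.

Definition bitn K (v : {ffun 'I_K -> bool}) (j : nat) : bool :=
  match insub j with Some o => v o | None => false end.

Definition bigc (g : form) (l : seq form) := foldr (@And A P) (Neg (And g (Neg g))) l.

Section Mk.
Variables (n : nat) (R : A -> rel 'I_n.+1) (pre : 'I_n.+1 -> form)
  (post : 'I_n.+1 -> seq (P * form)) (e : 'I_n.+1) (g : form).
Definition KK := \max_(x : 'I_n.+1) size (post x).
Definition TT := ('I_n.+1 * {ffun 'I_KK -> bool})%type.
Definition mm := #|{: TT}|.-1.
Definition dec (i : 'I_mm.+1) : TT := nth (ord0, [ffun=> false]) (enum {: TT}) i.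
Definition R' : A -> rel 'I_mm.+1 := fun a i j => R a (dec i).1 (dec j).1.
Definition pre' i := conj_lits (pre (dec i).1) (post (dec i).1) (bitn (dec i).2).
Definition post' i := newpost (post (dec i).1) (bitn (dec i).2).
Definition mkU := bigc g [seq Box (Upd R' pre' post' i) g | i <- enum 'I_mm.+1 & (dec i).1 == e].
End Mk.

Fixpoint tr (f : form) : form :=
  match f with
  | Atom p => Atom A p
  | Neg g => Neg (tr g)
  | And g h => And (tr g) (tr h)
  | Box a g =>
    match a with
    | Upd n R pre post e =>
        mkU R (fun x => tr (pre x)) (fun x => map (fun qp => (qp.1, tr qp.2)) (post x)) e (tr g)
    | _ => Box a (tr g)
    end
  end.


Lemma sat_bigc S (M : model A P S) s g k (s0 : seq 'I_k) (F : 'I_k -> form) :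
  sat M s (bigc g [seq F i | i <- s0]) <-> forall i, i \in s0 -> sat M s (F i).
Proof.
elim: s0 => [|i0 s0 IH] /=.
- split=> // _ [a b]; exact: b a.
- rewrite IH; split.
  + by move=> [h1 h2] i; rewrite in_cons => /orP [/eqP ->|]; [|apply: h2].
  + move=> h; split; first by apply: h; rewrite in_cons eqxx.
    by move=> i hi; apply: h; rewrite in_cons hi orbT.
Qed.

Lemma conj_lits_base S (M : model A P S) t base l b :
  sat M t (conj_lits base l b) -> sat M t base.
Proof. elim: l b => [|[q phi] l IH] b //= [_ h]; exact: IH h. Qed.

Lemma conj_lits_ext base l b b' : (forall j, j < size l -> b j = b' j) ->
  conj_lits base l b = conj_lits base l b'.
Proof.
elim: l b b' => [|[q phi] l IH] b b' //= h.
rewrite h // (IH _ (fun j => b' j.+1)) // => j hj; exact: h.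
Qed.

Lemma newpost_ext l b b' : (forall j, j < size l -> b j = b' j) ->
  newpost l b = newpost l b'.
Proof.
elim: l b b' => [|[q phi] l IH] b b' //= h.
rewrite h // (IH _ (fun j => b' j.+1)) // => j hj; exact: h.
Qed.

Lemma exists_bits S (M : model A P S) t base l :
  sat M t base -> exists b, sat M t (conj_lits base l b).
Proof.
move=> hb; elim: l => [|[q phi] l [b IH]] /=; first by exists (fun _ => false).
case: (classic (sat M t phi)) => h.
- by exists (fun j => if j is j'.+1 then b j' else true).
- by exists (fun j => if j is j'.+1 then b j' else false).
Qed.

Lemma look_newpost S (M : model A P S) t p base l b :
  sat M t (conj_lits base l b) -> (lookP M t p (newpost l b) <-> lookP M t p l).
Proof.
elim: l b => [|[q phi] l IH] b //= [h1 h2].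
case: (q == p); last exact: IH.
case: (b 0) h1 => /= h1; split=> //.
- by move=> _ [].
- by move=> [].
Qed.

Lemma allF_imp (Q Q' : form -> Prop) l : (forall f, Q f -> Q' f) -> allF Q l -> allF Q' l.
Proof. move=> h; elim: l => [|[q phi] l IH] //= [h1 h2]; split; [exact: h|exact: IH]. Qed.

Lemma lookP_map S (M : model A P S) t p (h : form -> form) l :
  allF (fun f => sat M t f <-> sat M t (h f)) l ->
  (lookP M t p (map (fun qp => (qp.1, h qp.2)) l) <-> lookP M t p l).
Proof.
elim: l => [|[q phi] l IH] //= [h1 h2].
case: (q == p); [by rewrite h1| exact: IH].
Qed.

Lemma dec_surj n (post : 'I_n.+1 -> seq (P * form)) (t : TT post) : exists i, dec i = t.
Proof.
have hpos : 0 < #|{: TT post}| by apply/card_gt0P; exists t.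
have hi : index t (enum {: TT post}) < (mm post).+1.
  by rewrite /mm prednK // cardE index_mem mem_enum.
by exists (Ordinal hi); rewrite /dec /= nth_index // mem_enum.
Qed.


Lemma mkU_correct n (R : A -> rel 'I_n.+1) pre post e g pre2 (h : form -> form) g2 :
  (forall x S (M : model A P S) s, sat M s (pre x) <-> sat M s (pre2 x)) ->
  (forall x, allF (fun f => forall S (M : model A P S) s, sat M s f <-> sat M s (h f)) (post x)) ->
  (forall S (M : model A P S) s, sat M s g <-> sat M s g2) ->
  forall S (M : model A P S) s, sat M s (Box (Upd R pre post e) g) <->
    sat M s (mkU R pre2 (fun x => map (fun qp => (qp.1, h qp.2)) (post x)) e g2).
Proof.
move=> Hpre Hpost Hg S M s.
set post2 := fun x => map (fun qp => (qp.1, h qp.2)) (post x).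
have Hpost2 : forall x t p, lookP M t p (post2 x) <-> lookP M t p (post x).
  move=> x t p; apply: lookP_map; apply: allF_imp (Hpost x) => f; exact.
have Hsz : forall x, size (post2 x) <= KK post2.
  move=> x; exact: (leq_bigmax (F := fun x => size (post2 x)) x).
have Hbits : forall x t, sat M t (pre x) ->
    exists i, (dec i).1 = x /\ sat M t (pre' pre2 (post:=post2) i).
  move=> x t Ht. have Ht2 : sat M t (pre2 x) by apply/Hpre.
  have [b Hb] := exists_bits (post2 x) Ht2.
  have [i Hi] := dec_surj ((x, [ffun o : 'I_(KK post2) => b o]) : TT post2).
  exists i; rewrite /pre' Hi /=; split=> //.
  rewrite (@conj_lits_ext _ _ _ b) // => j hj; rewrite /bitn.
  case: insubP => [o _ vo | hn]; first by rewrite ffunE vo.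
  by rewrite (leq_trans hj (Hsz x)) in hn.
have Hpre'2 : forall i t, sat M t (pre' pre2 (post:=post2) i) -> sat M t (pre (dec i).1).
  move=> i t H; apply/Hpre; exact: conj_lits_base H.
set Z := fun (x : {x : S * 'I_n.+1 | sat M x.1 (pre x.2)})
              (y : {y : S * 'I_(mm post2).+1 | sat M y.1 (pre' pre2 (post:=post2) y.2)}) =>
           (proj1_sig x).1 = (proj1_sig y).1 /\ (proj1_sig x).2 = (dec (proj1_sig y).2).1.
have hb : bisim (prodM M R pre post) (prodM M (R' R (post:=post2)) (pre' pre2 (post:=post2)) (post' (post:=post2))) Z.
  split.
  - move=> [[t x0] h1] [[t' i] h2] p [/= ? ?]; subst => /=.
    simpl in h2 |- *. rewrite /post' (look_newpost p h2); exact: iff_sym (Hpost2 _ _ _).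
  - move=> a [[t x0] h1] [[t' i] h2] [[u y0] h3] [/= ? ?] [/= r1 r2]; subst.
    have [i' [hi' h']] := Hbits y0 u h3.
    exists (exist _ (u, i') h'); split => //=; split => //.
    by rewrite /R' hi'.
  - move=> a [[t x0] h1] [[t' i] h2] [[u i'] h3] [/= ? ?] [/= r1 r2]; subst.
    exists (exist _ (u, (dec i').1) (Hpre'2 _ _ h3)); split => //=.
rewrite sat_Upd /mkU (sat_bigc _ _ g2 _ (fun i => Box (Upd (R' R (post:=post2)) (pre' pre2 (post:=post2)) (post' (post:=post2)) i) g2)).
split.
- move=> H i; rewrite mem_filter mem_enum andbT => /eqP hi.
  rewrite sat_Upd => H'.
  have H0 : sat M s (pre e) by rewrite -hi; apply: Hpre'2.
  apply/Hg; apply: (proj1 (bisim_sat g hb (s := exist _ (s, e) H0) (t := exist _ (s, i) H') _)).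
    by split => //=; rewrite hi.
  exact: H.
- move=> H H0.
  have [i [hi H']] := Hbits e s H0.
  have := H i; rewrite mem_filter mem_enum andbT hi eqxx => /(_ isT).
  rewrite sat_Upd => /(_ H') /Hg.
  apply: (proj2 (bisim_sat g hb (s := exist _ (s, e) H0) (t := exist _ (s, i) H') _)).
  by split => //=; rewrite hi.
Qed.

Fixpoint allTF (l : seq (P * form)) : Prop :=
  match l with [::] => True | (_, phi) :: l' => TF phi /\ allTF l' end.

Lemma TF_Upd n (R : A -> rel 'I_n.+1) pre post e g :
  TF (Box (Upd R pre post e) g) =
  (TF g /\ (forall x, TF (pre x)) /\ (forall x, allTF (post x)) /\
   (forall x p, postval (post x) p <> Atom A p ->
      is_top (postval (post x) p) \/ is_bot (postval (post x) p))).
Proof. by []. Qed.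

Lemma TF_conj_lits base l b : TF base -> allF (@TF A P) l -> TF (conj_lits base l b).
Proof. move=> hb; elim: l b => [|[q phi] l IH] b //= [h1 h2]; split; [by case: (b 0)|exact: IH]. Qed.

Lemma allTF_newpost l b : allTF (newpost l b).
Proof. elim: l b => [|[q phi] l IH] b //=; split; [by case: (b 0)|exact: IH]. Qed.

Lemma lookup_newpost l b p : lookup (newpost l b) p = None \/
  exists q, lookup (newpost l b) p = Some (topf q) \/ lookup (newpost l b) p = Some (botf q).
Proof.
elim: l b => [|[q phi] l IH] b /=; first by left.
case: (q == p); last exact: IH.
right; exists q; by case: (b 0); [left|right].
Qed.

Lemma TF_bigc g k (s0 : seq 'I_k) (F : 'I_k -> form) :
  TF g -> (forall i, TF (F i)) -> TF (bigc g [seq F i | i <- s0]).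
Proof. move=> hg hF; elim: s0 => [|i s0 IH] //=; split=> //. Qed.

Lemma mkU_TF n (R : A -> rel 'I_n.+1) pre2 post2 e g2 :
  (forall x, TF (pre2 x)) -> (forall x, allF (@TF A P) (post2 x)) -> TF g2 ->
  TF (mkU R pre2 post2 e g2).
Proof.
move=> hp hq hg; apply: TF_bigc => // i; rewrite TF_Upd; split=> //; split.
  move=> x; apply: TF_conj_lits; [exact: hp|exact: hq].
split; first by move=> x; apply: allTF_newpost.
move=> x p; rewrite /postval.
case: (lookup_newpost (post2 (dec x).1) (bitn (dec x).2) p) => [->|[q [->|->]]] //=.
- by move=> _; left; exists q.
- by move=> _; right; exists q.
Qed.

Lemma allF_map (h : form -> form) (Q : form -> Prop) l :
  allF (fun f => Q (h f)) l -> allF Q (map (fun qp => (qp.1, h qp.2)) l).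
Proof. elim: l => [|[q phi] l IH] //= [h1 h2]; split=> //; exact: IH. Qed.

Lemma tr_ok (f : form) : TF (tr f) /\ forall S (M : model A P S) s, sat M s f <-> sat M s (tr f).
Proof.
elim/form_ind2: f.
- by move=> p; split.
- move=> f [h1 h2]; split=> // S M s /=; by rewrite h2.
- move=> f g [h1 h2] [h3 h4]; split=> // S M s /=; by rewrite h2 h4.
- move=> [i|B|n R pre post e] g IHa [hg1 hg2].
  + split=> // S M s /=; split=> H t ht; [rewrite -hg2|rewrite hg2]; exact: H.
  + split=> // S M s /=; split=> H t ht; [rewrite -hg2|rewrite hg2]; exact: H.
  + case: IHa => Hpre Hpost; split.
    * apply: mkU_TF => //.
      - by move=> x; case: (Hpre x).
      - move=> x; apply: allF_map; apply: allF_imp (Hpost x) => f [] //.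
    * apply: mkU_correct => //.
      - by move=> x; case: (Hpre x).
      - move=> x; apply: allF_imp (Hpost x) => f [] //.
Qed.

End Main.

Unset Implicit Arguments.
Theorem corollary3 (A : finType) (P : countType) (phi : form A P) :
  exists psi : form A P, TF psi /\
    forall (S : Type) (M : model A P S) (s : S), sat M s phi <-> sat M s psi.
Proof. exists (tr phi); exact: tr_ok. Qed.
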